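(* Let $A\in\{\mathbb Z,\mathbb R\}$ and let $K,X\subset\mathbb R^d$ be $d$-dimensional convex bodies. If $K$ is $A$-$X$-free and inclusion-maximal among $A$-$X$-free convex bodies, then $K$ contains an $A$-unimodular copy of $X$.
   Context: A convex body is a nonempty compact convex subset of $\mathbb R^d$. An $A$-unimodular transformation is a map $T(x)=Mx+b$ with $M\in \mathrm{GL}_d(\mathbb Z)$ and $b\in A^d$; an $A$-unimodular copy of $X$ is $T(X)$ for such a $T$. A convex set is $A$-$X$-free if its relative interior contains no $A$-unimodular copy of $X$. *)

(* Defs.v *)
From HB Require Import structures.
From mathcomp Require Import all_boot all_order all_algebra.
From mathcomp Require Import all_classical all_reals topology normedtype.
Set Implicit Arguments. Unset Strict Implicit. Unset Printing Implicit Defensive.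
Import Order.TTheory GRing.Theory Num.Theory.
Import numFieldNormedType.Exports.
Local Open Scope classical_set_scope.
Local Open Scope ring_scope.

(* The additive group A of translations: A = Z or A = R. *)
Inductive Agroup := AZ | AR.

Section Defs.
Variables (R : realType) (d : nat).
Local Notation V := 'cV[R]_d.

Definition convex_set (S : set V) : Prop :=
  forall x y, S x -> S y -> forall t : R, 0 <= t -> t <= 1 ->
    S (t *: x + (1 - t) *: y).

Definition convex_body (S : set V) : Prop :=
  S !=set0 /\ compact S /\ convex_set S.

Definition aff_hull (S : set V) : set V :=
  [set x | exists (n : nat) (p : 'I_n -> V) (w : 'I_n -> R),
      (forall i, S (p i)) /\ \sum_(i < n) w i = 1 /\
      x = \sum_(i < n) w i *: p i].

Definition full_dim (S : set V) : Prop := aff_hull S = setT.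

Definition relint (S : set V) : set V :=
  [set x | S x /\ exists e : R, 0 < e /\
      forall y, ball x e y -> aff_hull S y -> S y].

Definition GLZ (M : 'M[int]_d) : Prop := \det M = 1 \/ \det M = -1.

Definition in_A (A : Agroup) (b : V) : Prop :=
  match A with
  | AZ => forall i, b i 0 \is a Num.int
  | AR => True
  end.

Definition unimod_map (M : 'M[int]_d) (b : V) (x : V) : V :=
  map_mx (fun z : int => z%:~R) M *m x + b.

Definition contains_A_copy (A : Agroup) (X S : set V) : Prop :=
  exists (M : 'M[int]_d) (b : V),
    GLZ M /\ in_A A b /\ (unimod_map M b @` X) `<=` S.

Definition A_X_free (A : Agroup) (X S : set V) : Prop :=
  ~ contains_A_copy A X (relint S).

End Defs.

(* Main.v *)
Require Import Defs.
From HB Require Import structures.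
From mathcomp Require Import all_boot all_order all_algebra.
From mathcomp Require Import all_classical all_reals topology normedtype.
From mathcomp Require Import zify.
Import Order.TTheory GRing.Theory Num.Theory.
Import numFieldNormedType.Exports.
Local Open Scope classical_set_scope.
Local Open Scope ring_scope.



Lemma pigeon (T : finType) (Q : nat -> T -> Prop) :
  (forall n m t, (n <= m)%N -> Q m t -> Q n t) ->
  (forall n, exists t, Q n t) -> exists t, forall n, Q n t.
Proof.
move=> mono H; case: (pselect (exists t, forall n, Q n t)) => [//|Hn].
have H' : forall t, exists n, ~ Q n t.
  by move=> t; apply/existsNP => Hall; apply: Hn; exists t.
have [f Hf] := choice H'.
have [t Ht] := H (\max_t f t)%N.
by exfalso; apply: (Hf t); apply: (mono _ _ t _ Ht); exact: leq_bigmax.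
Qed.

Lemma bounded_int_mx m n (N : nat) (M : 'M[int]_(m, n)) :
  (forall i j, `|M i j| < N%:Z) ->
  exists f : 'M['I_(N + N).+1]_(m, n), M = \matrix_(i, j) ((f i j)%:Z - N%:Z).
Proof.
move=> HM; exists (\matrix_(i, j) inord (absz (M i j + N%:Z))).
apply/matrixP => i j; rewrite !mxE.
have := HM i j; rewrite ltr_norml => /andP[h1 h2].
have h3 : (absz (M i j + N%:Z)%R < (N + N).+1)%N by lia.
rewrite inordK //.
lia.
Qed.

Lemma real_int_bound (R : realType) (z : int) (N : nat) :
  `|(z%:~R : R)| < N%:R -> `|z| < N%:Z.
Proof. by rewrite -intr_norm => h; rewrite -(ltr_int R). Qed.

Section Aux.
Variable R : realType.

Lemma entry_le_norm m n (x : 'M[R]_(m, n)) i j : `|x i j| <= `|x|.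
Proof.
rewrite (_ : `|x| = mx_norm x) // mx_normrE.
by apply/bigmax_geP; right; exists (i, j).
Qed.

Lemma norm_le_entries m n (x : 'M[R]_(m, n)) c :
  0 <= c -> (forall i j, `|x i j| <= c) -> `|x| <= c.
Proof.
move=> c0 H; rewrite (_ : `|x| = mx_norm x) // mx_normrE.
by apply/bigmax_leP; split => // -[i j] _; apply: H.
Qed.

Lemma norm_tr m n (x : 'M[R]_(m, n)) : `|x^T| <= `|x|.
Proof.
apply: norm_le_entries => // i j; rewrite mxE. exact: entry_le_norm.
Qed.

Lemma tr_continuous m n : continuous (fun x : 'M[R]_(m, n) => x^T).
Proof.
move=> x s /= /(nbhs_ballP (x^T)) [e e0 es].
apply/nbhs_ballP; exists e => //= y xy; apply: es.
move: xy; rewrite -!ball_normE /= => xy.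
have -> : x^T - y^T = (x - y)^T by rewrite linearB.
by apply: le_lt_trans (norm_tr _ _ (x - y)) xy.
Qed.
End Aux.

Section Main.
Variables (R : realType) (d : nat).
Local Notation V := 'cV[R]_d.

Definition box (e : R) : set V := [set u | forall i, `|u i 0| <= e].
Definition thick (K : set V) (e : R) : set V :=
  [set y | exists k u, K k /\ box e u /\ y = k + u].

Lemma box_compact e : compact (box e).
Proof.
rewrite (_ : box e = (fun r : 'rV[R]_d => r^T) @`
   [set v : 'rV[R]_d | forall i, `[-e, e]%classic (v ord0 i)]).
  apply: (@continuous_compact _ _ (fun r : 'rV[R]_d => r^T)).
    apply: continuous_subspaceT => r; exact: tr_continuous.
  exact: (@rV_compact R d (fun=> `[-e, e]%classic) (fun=> @segment_compact R (-e) e)).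
apply/seteqP; split => u.
  move=> Hu; exists u^T; last by rewrite trmxK.
  by move=> i; rewrite /= mxE in_itv /= -ler_norml.
move=> [v Hv <-] i; rewrite mxE; have := Hv i.
by rewrite /= in_itv /= -ler_norml (ord1 0).
Qed.

Lemma thick_compact K e : compact K -> compact (thick K e).
Proof.
move=> cK.
rewrite (_ : thick K e = (fun p : V * V => p.1 + p.2) @` (K `*` box e)).
  apply: (@continuous_compact _ _ (fun p : V * V => p.1 + p.2) (K `*` box e)); last first.
    have H := compact_setX cK (box_compact e). exact H.
  apply: continuous_subspaceT => p; exact: (@add_continuous _ p).
apply/seteqP; split => y.
  by move=> [k [u [Kk [Bu ->]]]]; exists (k, u).
by move=> [[k u] [/= Kk Bu] <-]; exists k, u.
Qed.


Lemma relint_sub (S : set V) : relint S `<=` S.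
Proof. by move=> x []. Qed.

Lemma box0 e : 0 <= e -> box e 0.
Proof. by move=> e0 i; rewrite mxE normr0. Qed.

Lemma thick_sub K e : 0 <= e -> K `<=` thick K e.
Proof. by move=> e0 k Kk; exists k, 0; split => //; split; [exact: box0|rewrite addr0]. Qed.

Lemma thick_mono K e e' : e <= e' -> thick K e `<=` thick K e'.
Proof.
move=> ee' y [k [u [Kk [Bu ->]]]]; exists k, u; split => //; split => //.
by move=> i; apply: le_trans (Bu i) ee'.
Qed.

Lemma thick_convex K e : convex_set K -> convex_set (thick K e).
Proof.
move=> cK x y [k [u [Kk [Bu ->]]]] [k' [u' [Kk' [Bu' ->]]]] t t0 t1.
exists (t *: k + (1 - t) *: k'), (t *: u + (1 - t) *: u'); split.
  exact: cK.
split; last first.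
  by rewrite !scalerDr -!addrA; congr (_ + _); rewrite addrCA.
move=> i; rewrite !mxE.
apply: le_trans (ler_normD _ _) _.
rewrite !normrM (ger0_norm t0) (ger0_norm (_ : 0 <= 1 - t)); last by rewrite subr_ge0.
have -> : e = t * e + (1 - t) * e by rewrite -mulrDl addrCA subrr addr0 mul1r.
apply: lerD; apply: ler_wpM2l => //; by [exact: Bu | rewrite subr_ge0 | exact: Bu'].
Qed.

Lemma thick_body K e : convex_body K -> 0 <= e -> convex_body (thick K e).
Proof.
move=> [[k Kk] [cK vK]] e0; split; first by exists k; exact: thick_sub.
split; [exact: thick_compact | exact: thick_convex].
Qed.

Lemma box_norm e u : 0 <= e -> box e u -> `|u| <= e.
Proof. by move=> e0 Bu; apply: norm_le_entries => // i j; rewrite (ord1 j); exact: Bu. Qed.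

Lemma thick_inter K y : closed K ->
  (forall n : nat, thick K (n.+1%:R^-1) y) -> K y.
Proof.
move=> clK Hy; apply: clK => B /(nbhs_ballP y) [e e0 eB].
have e0' : 0 < e by [].
pose n := Num.truncn (e^-1).
have [k [u [Kk [Bu yE]]]] := Hy n.
exists k; split => //; apply: eB.
rewrite -ball_normE /= yE addrAC subrr add0r.
apply: le_lt_trans (box_norm _ _ _ Bu) _; first by rewrite invr_ge0.
rewrite -[X in _ < X]invrK ltf_pV2 ?posrE ?invr_gt0 //; exact: truncnS_gt.
Qed.


Lemma compact_normB (K : set V) : compact K ->
  exists B : R, 0 <= B /\ forall x, K x -> `|x| <= B.
Proof.
move=> /compact_bounded [M0 [_ HM]].
exists (`|M0| + 1); split; first by rewrite addr_ge0.
apply: HM; apply: le_lt_trans (ler_norm M0) _; rewrite ltrDl ltr01 //.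
Qed.

Lemma thick_neq (K : set V) e : (0 < d)%N -> compact K -> K !=set0 -> 0 < e ->
  thick K e <> K.
Proof.
move=> d0 cK [k Kk] e0 Heq.
pose j0 : 'I_d := Ordinal d0.
pose v : V := delta_mx j0 0.
have Hn : forall n : nat, K (k + (n%:R * e) *: v).
  elim => [|n IH]; first by rewrite mul0r scale0r addr0.
  rewrite -Heq; exists (k + (n%:R * e) *: v), (e *: v); split => //; split.
    move=> i; rewrite !mxE normrM (gtr0_norm e0).
    by case: (_ && _); rewrite ?normr1 ?normr0 ?mulr1 ?mulr0 // ltW.
  by rewrite -addrA -scalerDl -(addn1 n) (natrD R n 1) mulrDl mul1r.
have [B [B0 HB]] := compact_normB K cK.
pose n := (Num.truncn ((B + `|k j0 0|) / e)).+1.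
have := HB _ (Hn n); move/(le_trans (entry_le_norm _ _ _ _ j0 0)).
rewrite !mxE eqxx /= mulr1 => H1.
have H2 : n%:R * e <= B + `|k j0 0|.
  have h1 := ler_normB (k j0 0 + n%:R * e) (k j0 0).
  have h2 : n%:R * e <= `|k j0 0 + n%:R * e - k j0 0|.
    by rewrite addrC addKr; exact: ler_norm.
  apply: le_trans h2 (le_trans h1 _).
  by rewrite lerD2r.
have := truncnS_gt ((B + `|k j0 0|) / e).
rewrite -/n ltr_pdivrMr // => H3.
by have := lt_le_trans H3 H2; rewrite ltxx.
Qed.


Definition MR (M : 'M[int]_d) : 'M[R]_d := map_mx (fun z : int => z%:~R) M.

Lemma unimod_aff (M : 'M[int]_d) b n (p : 'I_n -> V) (w : 'I_n -> R) :
  \sum_i w i = 1 ->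
  \sum_i w i *: unimod_map M b (p i) = unimod_map M b (\sum_i w i *: p i).
Proof.
move=> Hw; rewrite /unimod_map.
rewrite (eq_bigr (fun i => w i *: (MR M *m p i) + w i *: b)); last first.
  by move=> i _; rewrite scalerDr.
rewrite big_split /= -scaler_suml Hw scale1r mulmx_sumr; congr (_ + _).
by apply: eq_bigr => i _; rewrite scalemxAr.
Qed.

Lemma comb_bound n (y : 'I_n -> V) (w : 'I_n -> R) B i :
  (forall k, `|y k i 0| <= B) ->
  `|(\sum_k w k *: y k) i 0| <= (\sum_k `|w k|) * B.
Proof.
move=> Hy; rewrite summxE mulr_suml.
apply: le_trans (ler_norm_sum _ _ _) _; apply: ler_sum => k _.
by rewrite mxE normrM; apply: ler_wpM2l => //.
Qed.

Lemma M_bound (X : set V) : full_dim X -> exists C : R, 0 <= C /\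
  forall (M : 'M[int]_d) b B, 0 <= B ->
    (forall x, X x -> forall i, `|unimod_map M b x i 0| <= B) ->
    forall i j, `|(M i j)%:~R : R| <= C * B.
Proof.
move=> HX.
have H0 : aff_hull X 0 by rewrite HX.
case: H0 => n0 [p0 [w0 [Xp0 [Hw0 E0]]]].
have Hj : forall j : 'I_d, exists C : R, 0 <= C /\
  forall (M : 'M[int]_d) b B, 0 <= B ->
    (forall x, X x -> forall i, `|unimod_map M b x i 0| <= B) ->
    forall i, `|(M i j)%:~R : R| <= C * B.
  move=> j.
  have H1 : aff_hull X (delta_mx j 0) by rewrite HX.
  case: H1 => n1 [p1 [w1 [Xp1 [Hw1 E1]]]].
  exists (\sum_k `|w1 k| + \sum_k `|w0 k|); split.
    by apply: addr_ge0; apply: sumr_ge0 => k _.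
  move=> M b B B0 HB i.
  have -> : (M i j)%:~R = (unimod_map M b (delta_mx j 0) - unimod_map M b 0) i 0 :> R.
    rewrite /unimod_map mulmx0 add0r addrK -colE !mxE //.
  have -> : unimod_map M b 0 = \sum_k w0 k *: unimod_map M b (p0 k).
    by rewrite unimod_aff // -E0.
  have -> : unimod_map M b (delta_mx j 0) = \sum_k w1 k *: unimod_map M b (p1 k).
    by rewrite unimod_aff // -E1.
  rewrite mxE [X in `|_ + X|]mxE mulrDl.
  apply: le_trans (ler_normB _ _) _.
  apply: lerD; apply: comb_bound => k; [exact: HB | exact: HB].
have [f Hf] := choice Hj.
exists (\big[Num.max/0]_j f j); split.
  by apply/bigmax_geP; left.
move=> M b B B0 HB i j.
have [f0 Hf1] := Hf j.
apply: le_trans (Hf1 M b B B0 HB i) _.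
apply: ler_wpM2r => //.
exact: le_bigmax.
Qed.


Lemma int_closed : closed [set b : V | forall i, b i 0 \is a Num.int].
Proof.
move=> y Hy i; apply/negPn/negP => Hni.
set r := y i 0; set fl := Num.floor r.
have /andP[hle hup] := floor_itv r.
have hlt : fl%:~R < r.
  by rewrite lt_neqAle hle andbT; apply: contra Hni => /eqP h; rewrite intrEfloor h.
pose del := Num.min (r - fl%:~R) ((fl + 1)%:~R - r).
have del0 : 0 < del by rewrite lt_min !subr_gt0 hlt hup.
have [z [Zz yz]] := Hy _ (nbhsx_ballx y del del0).
have /intrP [k hk] := Zz i.
have hd : `|r - z i 0| < del.
  move: yz; rewrite -ball_normE /= => yz.
  have := le_lt_trans (entry_le_norm _ _ _ (y - z) i 0) yz.
  by rewrite mxE [X in `|_ + X|]mxE.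
have [hk1|hk1] := lerP k fl.
  have hz : z i 0 <= fl%:~R by rewrite hk ler_int.
  have : del <= r - z i 0.
    apply: le_trans (_ : del <= r - fl%:~R) _; first by rewrite ge_min lexx.
    by rewrite lerD2l lerN2.
  move=> h; have := le_lt_trans (le_trans h (ler_norm _)) hd; by rewrite ltxx.
have hk2 : fl + 1 <= k by lia.
have hz : (fl + 1)%:~R <= z i 0 by rewrite hk ler_int.
have : del <= z i 0 - r.
  apply: le_trans (_ : del <= (fl + 1)%:~R - r) _; first by rewrite ge_min lexx orbT.
  by rewrite lerD2r.
move=> h; rewrite distrC in hd; have := le_lt_trans (le_trans h (ler_norm _)) hd.
by rewrite ltxx.
Qed.



Lemma closed_limit (C : set V) (f : V -> V) (beta : V) :
  closed C -> continuous f ->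
  (forall W, nbhs beta W -> exists y, W y /\ C (f y)) -> C (f beta).
Proof.
move=> clC cf H; apply: clC => W nW.
have nW' : nbhs beta (f @^-1` W) := cf beta W nW.
by have [y [Wy Cy]] := H _ nW'; exists (f y).
Qed.

Lemma transl_continuous (c : V) : continuous (fun y : V => c + y).
Proof.
move=> x s /= /(nbhs_ballP (c + x)) [e e0 es].
apply/nbhs_ballP; exists e => //= y xy; apply: es.
move: xy; rewrite -!ball_normE /= => xy.
by rewrite opprD addrACA subrr add0r.
Qed.

End Main.

Theorem corollary2p8 (R : realType) (d : nat) (A : Agroup)
    (K X : set 'cV[R]_d) :
  convex_body X -> full_dim X ->
  convex_body K -> full_dim K ->
  A_X_free A X K ->
  (forall K' : set 'cV[R]_d, convex_body K' -> A_X_free A X K' ->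
     K `<=` K' -> K' = K) ->
  contains_A_copy A X K.
Proof.
move=> bX fX bK fK freeK maxK.
case: (pselect (contains_A_copy A X K)) => // Hno; exfalso.
have [[k0 Kk0] [cK cvK]] := bK.
case: (posnP d) => [d0 | dpos].
  apply: Hno; exists 1%:M, 0; split; first by left; exact: det1.
  have inA0 : forall A', in_A A' (0 : 'cV[R]_d) by case => //= i; rewrite mxE rpred0.
  split; first exact: inA0.
  move=> y _; suff -> : y = k0 by [].
  apply/matrixP => i j; exfalso; have := ltn_ord i; move: (nat_of_ord i) => m.
  by rewrite d0.
pose e (n : nat) : R := (n.+1%:R)^-1.
have e_pos n : 0 < e n by rewrite invr_gt0.
have e_le1 n : e n <= 1 by rewrite invf_le1 // ler1n.
have e_mono n m : (n <= m)%N -> e m <= e n.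
  by move=> nm; rewrite lef_pV2 ?posrE // ler_nat.
have step : forall n, exists M b, GLZ M /\ in_A A b /\
    (forall x, X x -> thick R d K (e n) (unimod_map M b x)).
  move=> n.
  have nfree : ~ A_X_free A X (thick R d K (e n)).
    move=> fr; apply: (thick_neq R d K (e n) dpos cK (ex_intro _ k0 Kk0) (e_pos n)).
    apply: maxK => //; first exact: thick_body (ltW (e_pos n)).
    exact: thick_sub (ltW (e_pos n)).
  have [M [b [HM [Hb Hsub]]]] := contrapT nfree.
  exists M, b; split => //; split => // x Xx.
  by apply: relint_sub; apply: Hsub; exists x.
have [B1 [B10 HB1]] := compact_normB R d (thick R d K 1) (thick_compact R d K 1 cK).
have [C [C0 HC]] := M_bound R d X fX.
pose N := (Num.truncn (C * B1)).+1.
have CN : C * B1 < N%:R by exact: truncnS_gt.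
pose g (f : 'M['I_(N + N).+1]_d) : 'M[int]_d :=
  \matrix_(i, j) ((f i j)%:Z - N%:Z).
pose Q n f := exists b, GLZ (g f) /\ in_A A b /\
    (forall x, X x -> thick R d K (e n) (unimod_map (g f) b x)).
have [f Hf] : exists f, forall n, Q n f.
  apply: pigeon.
    move=> n m t nm [b [H1 [H2 H3]]]; exists b; split => //; split => // x Xx.
    exact: thick_mono (e_mono _ _ nm) _ (H3 x Xx).
  move=> n; have [M [b [HM [Hb Hsub]]]] := step n.
  have HMb : forall i j, `|M i j| < N%:Z.
    move=> i j; apply: (real_int_bound R).
    apply: le_lt_trans CN; apply: (HC M b B1 B10) => x Xx i'.
    apply: le_trans (entry_le_norm _ _ _ _ _ _) _; apply: HB1.
    exact: thick_mono (e_le1 n) _ (Hsub x Xx).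
  have [f Mf] := bounded_int_mx _ _ N M HMb.
  by exists f, b; rewrite /g -Mf.
set M := g f.
have [bs Hbs] := choice Hf.
have [HGLZ _] := Hbs 0%N.
have [[p Xp] _] := bX.
pose BM := [set b : 'cV[R]_d | thick R d K 1 (MR R d M *m p + b)].
have cBM : compact BM.
  rewrite (_ : BM = (fun y => - (MR R d M *m p) + y) @` thick R d K 1).
    apply: continuous_compact; last exact: thick_compact.
    apply: continuous_subspaceT => y; exact: transl_continuous.
  apply/seteqP; split => b Hb.
    by exists (MR R d M *m p + b) => //; rewrite addKr.
  by case: Hb => y Hy <-; rewrite /BM /= addNKr.
have FBM : (bs @ \oo) BM.
  exists 0%N => // n _ /=; have [_ [_ H3]] := Hbs n.
  exact: thick_mono (e_le1 n) _ (H3 p Xp).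
have [beta [BMbeta clbeta]] := cBM _ _ FBM.
have near_beta : forall n0 W, nbhs beta W ->
    exists m, (n0 <= m)%N /\ W (bs m).
  move=> n0 W nW.
  have FA : (bs @ \oo) [set y | exists m, (n0 <= m)%N /\ y = bs m].
    by exists n0 => // m /= Hm; exists m.
  have [y [[m [Hm ->]] Wy]] := clbeta _ _ FA nW.
  by exists m.
have clK : closed K := compact_closed (@norm_hausdorff _ _) cK.
apply: Hno; exists M, beta; split; first exact: HGLZ.
split.
  have clA : closed [set b : 'cV[R]_d | in_A A b].
    case: (A) => /=; [exact: int_closed | exact: closedT].
  apply: (closed_limit R d _ id beta clA); first by move=> z; exact: cvg_id.
  move=> W nW; have [m [_ Wm]] := near_beta 0%N W nW.
  exists (bs m); split => //; by have [_ [H2 _]] := Hbs m.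
move=> y [x Xx <-].
apply: (thick_inter R d K _ clK) => n0.
apply: (closed_limit R d _ (fun b => unimod_map M b x) beta).
- exact: compact_closed (@norm_hausdorff _ _) (thick_compact R d K _ cK).
- exact: transl_continuous.
- move=> W nW; have [m [nm Wm]] := near_beta n0 W nW.
  exists (bs m); split => //; have [_ [_ H3]] := Hbs m.
  exact: thick_mono (e_mono _ _ nm) _ (H3 x Xx).
Qed.
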